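(* Let $k\ge 3$ and $r\ge 2$ be integers, let $H$ be a selfish $k$-graph with at least one edge, and let $G=G_H$ be a $(k-1)$-graph obtained from $H$ by removing, from each edge of $H$, one vertex of degree one. Then \[ R(H;r)\le R(G;r)+r\,(|E(H)|-1)+1 . \]
   Context: A $k$-graph is a $k$-uniform hypergraph. An edge of a hypergraph is called selfish if it contains a vertex of degree one (a vertex belonging to no other edge); a hypergraph is selfish if every edge is selfish. For a selfish $k$-graph $H$, $G_H$ denotes the $(k-1)$-graph obtained by deleting one degree-one vertex from each edge of $H$ (deleted vertices are removed from the vertex set), so $|E(G_H)|=|E(H)|$. For a $j$-graph $F$ and integer $r\ge2$, $R(F;r)$ is the minimum $n$ such that every $r$-coloring of the edges of the complete $j$-graph $K_n^{(j)}$ contains a monochromatic copy of $F$. *)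

(* Defs.v *)
From mathcomp Require Import all_boot.
Set Implicit Arguments. Unset Strict Implicit. Unset Printing Implicit Defensive.

(* A hypergraph is given by a finite vertex set A : {set V} and an edge set
   E : {set {set V}} (each edge a subset of A). *)
Definition uniform (V : finType) (j : nat) (E : {set {set V}}) : Prop :=
  forall e, e \in E -> #|e| = j.

Definition deg (V : finType) (E : {set {set V}}) (v : V) : nat :=
  #|[set e in E | v \in e]|.

Definition selfish (V : finType) (E : {set {set V}}) : Prop :=
  forall e, e \in E -> exists2 v, v \in e & deg E v = 1.

(* An r-colouring of the edges of K_n^(j) is given by a map from subsets of
   'I_n to colours 'I_r (only its values on j-subsets matter). *)
Definition mono_copy (n r : nat) (c : {set 'I_n} -> 'I_r)
    (V : finType) (A : {set V}) (E : {set {set V}}) : Prop :=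
  exists f : V -> 'I_n, {in A &, injective f} /\
    exists i : 'I_r, forall e, e \in E -> c (f @: e) = i.

Definition arrows (n r : nat) (V : finType) (A : {set V}) (E : {set {set V}})
  : Prop := forall c : {set 'I_n} -> 'I_r, mono_copy c A E.

Definition ramsey_number (r : nat) (V : finType) (A : {set V})
    (E : {set {set V}}) (N : nat) : Prop :=
  arrows N r A E /\ forall m, m < N -> ~ arrows m r A E.

(* Main.v *)
Require Import Defs.
From mathcomp Require Import all_boot.

Lemma pigeon (X r m : nat) (c : 'I_X -> 'I_r) :
  r * (m - 1) < X -> exists i, m <= #|[set y | c y == i]|.
Proof.
move=> HX; apply/existsP; apply: contraLR HX; rewrite negb_exists => /forallP H.
rewrite -leqNgt.
have -> : X = \sum_(i < r) #|[set y | c y == i]|.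
  rewrite -{1}(card_ord X) -sum1_card (partition_big c xpredT) //=.
  apply: eq_bigr => i _; rewrite sum1dep_card; apply: eq_card => y; by rewrite inE.
rewrite -[X in _ <= X * _]card_ord -sum_nat_const.
apply: leq_sum => i _; have := H i; rewrite -ltnNge; case: m {H} => //.
by move=> m; rewrite subn1.
Qed.

Lemma greedy (T : finType) (U : eqType) (t0 : T) (F : U -> {set T}) (l : seq U) :
  uniq l -> (forall u, u \in l -> size l <= #|F u|) ->
  exists g : U -> T, (forall u, u \in l -> g u \in F u) /\ {in l &, injective g}.
Proof.
elim: l => [|u l IH] /=.
  by move=> _ _; exists (fun _ => t0); split=> // ? ?.
case/andP=> ul Ul H.
have [g' [Hg' Ig']] : exists g : U -> T, (forall u, u \in l -> g u \in F u) /\ {in l &, injective g}.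
  apply: IH => // v Hv; apply: leq_trans (H v _); first exact: leqnSn.
  by rewrite inE Hv orbT.
set S := [set x in map g' l].
have : 0 < #|F u :\: S|.
  have HS : #|S| <= size l by rewrite cardsE (leq_trans (card_size _)) // size_map.
  have Hu := H u (mem_head _ _).
  have := leq_card_setU (F u :\: S) S; case=> Hle _.
  have : #|F u| <= #|F u :\: S| + #|S|.
    by apply: leq_trans Hle; apply: subset_leq_card; apply/subsetP => x Hx; rewrite in_setU in_setD Hx andbT; case: (x \in S).
  move=> Hl; rewrite lt0n; apply/negP => /eqP H0; move: Hl; rewrite H0 add0n => Hl.
  by have := leq_trans Hu (leq_trans Hl HS); rewrite ltnn.
case/card_gt0P => t; rewrite inE => /andP [tS tF].
exists (fun x => if x == u then t else g' x); split.
  move=> v; rewrite inE; case: eqP => [-> //|_ /= Hv]; exact: Hg'.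
move=> x y; rewrite !inE.
case: (eqVneq x u) => [->|xu]; case: (eqVneq y u) => [->|yu] //= Hx Hy.
- move=> E; move: tS; rewrite E inE; move/negP; case; apply/mapP; by exists y.
- move=> E; move: tS; rewrite -E inE; move/negP; case; apply/mapP; by exists x.
- exact: Ig'.
Qed.
Set Implicit Arguments. Unset Strict Implicit.
Set Implicit Arguments. Unset Strict Implicit.

Lemma deg1_uniq (V : finType) (E : {set {set V}}) v e e' :
  deg E v = 1 -> e \in E -> e' \in E -> v \in e -> v \in e' -> e = e'.
Proof.
rewrite /deg => /eqP /cards1P [e0 H0] He He' ve ve'.
have : e \in [set e in E | v \in e] by rewrite inE He ve.
have : e' \in [set e in E | v \in e] by rewrite inE He' ve'.
by rewrite H0 !inE => /eqP -> /eqP ->.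
Qed.

Theorem lemma5 (k r : nat) (V : finType) (E : {set {set V}})
    (s : {set V} -> V) (NH NG : nat) :
  3 <= k -> 2 <= r ->
  uniform k E -> selfish E -> E != set0 ->
  (forall e, e \in E -> s e \in e /\ deg E (s e) = 1) ->
  ramsey_number r [set: V] E NH ->
  ramsey_number r (~: (s @: E)) [set e :\ s e | e in E] NG ->
  NH <= NG + r * (#|E| - 1) + 1.
Proof.
move=> _ Hr _ _ _ Hs [_ HminH] [HG _].
set m := #|E|; set X := r * (m - 1) + 1.
suff HA : arrows (NG + X) r [set: V] E.
  rewrite -addnA leqNgt; apply/negP => Hlt; exact: (HminH _ Hlt HA).
move=> c.
have r0 : 'I_r by exists 0; apply: leq_trans Hr.
have x0 : 'I_X by exists 0; rewrite /X addn1.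
pose cnt (S : {set 'I_NG}) (i : 'I_r) :=
  #|[set y : 'I_X | c (lshift X @: S :|: [set rshift NG y]) == i]|.
pose c' (S : {set 'I_NG}) := odflt r0 [pick i | m <= cnt S i].
have Hc' : forall S, m <= cnt S (c' S).
  move=> S; rewrite /c'; case: pickP => [i //|H].
  have [i Hi] := @pigeon X r m (fun y => c (lshift X @: S :|: [set rshift NG y])) ltac:(by rewrite /X addn1 ltnS).
  by have := H i; rewrite /= /cnt Hi.
have [f [fI [i Hi]]] := HG c'.
have Hi' : forall e, e \in E -> c' (f @: (e :\ s e)) = i.
  by move=> e He; apply: Hi; apply/imsetP; exists e.
pose F (e : {set V}) := [set y : 'I_X | c (lshift X @: (f @: (e :\ s e)) :|: [set rshift NG y]) == i].
have [g [Hg gI]] := @greedy _ _ x0 F (enum E) (enum_uniq _)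
  (fun e He => ltac:(rewrite -cardE; rewrite mem_enum in He; rewrite /F -(Hi' e He); exact: Hc')).
pose h (v : V) := if [pick e in E | s e == v] is Some e then rshift NG (g e) else lshift X (f v).
have hs : forall e, e \in E -> h (s e) = rshift NG (g e).
  move=> e He; rewrite /h; case: pickP => [e' /andP [He' /eqP se]|H].
    have [s1 d1] := Hs e He; have [s2 _] := Hs e' He'.
    by rewrite se in s2; rewrite (deg1_uniq d1 He He' s1 s2).
  by have := H e; rewrite He eqxx.
have hn : forall e v, e \in E -> v \in e -> v != s e -> h v = lshift X (f v).
  move=> e v He ve vs; rewrite /h; case: pickP => [e' /andP [He' /eqP se]|//].
  have [s2 d2] := Hs e' He'; rewrite se in s2 d2.
  by move: vs; rewrite (deg1_uniq d2 He He' ve s2) -se eqxx.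
exists h; split.
  move=> v w _ _; rewrite /h.
  case: pickP => [e /andP [He /eqP se]|Hv]; case: pickP => [e' /andP [He' /eqP se']|Hw].
  - move/rshift_inj => E1; rewrite -se -se'; congr s.
    by apply: gI => //; rewrite mem_enum.
  - move/(congr1 val) => /=; have := ltn_ord (f w); move=> lt eq; move: lt; rewrite -eq.
    by rewrite ltnNge leq_addr.
  - move/(congr1 val) => /=; have := ltn_ord (f v); move=> lt eq; move: lt; rewrite eq.
    by rewrite ltnNge leq_addr.
  - move/lshift_inj => efv; apply: fI => //.
    + rewrite inE; apply/imsetP => [[e He ve]]; by have := Hv e; rewrite He ve eqxx.
    + rewrite inE; apply/imsetP => [[e He ve]]; by have := Hw e; rewrite He ve eqxx.
exists i => e He.
have [se _] := Hs e He.
rewrite -(setD1K se) imsetU1 hs //.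
have -> : h @: (e :\ s e) = lshift X @: (f @: (e :\ s e)).
  rewrite -imset_comp; apply: eq_in_imset => v; rewrite in_setD1 => /andP [vs ve].
  exact: hn He ve vs.
have := Hg e; rewrite mem_enum => /(_ He); rewrite /F inE setUC => /eqP.
move=> H; exact: H.
Qed.
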